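(* Let $G$ be a graph on $n$ vertices with at least one edge that is both vertex-transitive and edge-transitive, and let $\lambda_1(G)$ and $\lambda_n(G)$ be the largest and smallest eigenvalues of its adjacency matrix. Then $\chi_v(G)=1-\frac{\lambda_1(G)}{\lambda_n(G)}=\chi_{sv}(G)$.
   Context: Graphs are finite, simple, undirected. Vertex-/edge-transitive means the automorphism group acts transitively on vertices/edges. For a graph on $n$ vertices with at least one edge, a vector $t$-coloring ($t\ge2$) assigns unit vectors $u_i\in\mathbb R^n$ to vertices with $u_i^{\mathrm T}u_j\le-\frac1{t-1}$ for every edge $\{i,j\}$, and a strict vector $t$-coloring requires equality on every edge; $\chi_v$ and $\chi_{sv}$ are the smallest $t\ge2$ admitting a vector, resp. strict vector, $t$-coloring. *)

(* Defs.v *)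
From mathcomp Require Import all_boot all_order all_algebra all_fingroup.
From mathcomp Require Import reals.
Set Implicit Arguments. Unset Strict Implicit. Unset Printing Implicit Defensive.
Import Order.TTheory GRing.Theory Num.Theory.
Local Open Scope ring_scope.

Definition simple_graph (n : nat) (e : rel 'I_n) : Prop :=
  (forall x y, e x y = e y x) /\ (forall x, ~~ e x x).

Definition has_edge (n : nat) (e : rel 'I_n) : Prop := exists x y, e x y.

Definition is_aut (n : nat) (e : rel 'I_n) (s : {perm 'I_n}) : Prop :=
  forall x y, e (s x) (s y) = e x y.

Definition vertex_transitive (n : nat) (e : rel 'I_n) : Prop :=
  forall x y, exists s, is_aut e s /\ s x = y.

Definition edge_transitive (n : nat) (e : rel 'I_n) : Prop :=
  forall x y x' y', e x y -> e x' y' ->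
    exists s, is_aut e s /\ [set s x; s y] = [set x'; y'].

Definition adjmx (R : realType) (n : nat) (e : rel 'I_n) : 'M[R]_n :=
  \matrix_(i, j) (e i j)%:R.

Definition largest_eigenvalue (R : realType) (n : nat) (A : 'M[R]_n) (l : R) :=
  eigenvalue A l /\ forall m, eigenvalue A m -> m <= l.

Definition smallest_eigenvalue (R : realType) (n : nat) (A : 'M[R]_n) (l : R) :=
  eigenvalue A l /\ forall m, eigenvalue A m -> l <= m.

Definition dotv (R : realType) (n : nat) (u v : 'rV[R]_n) : R := (u *m v^T) 0 0.

Definition vector_coloring (R : realType) (n : nat) (e : rel 'I_n) (t : R) : Prop :=
  exists u : 'I_n -> 'rV[R]_n,
    (forall i, dotv (u i) (u i) = 1) /\
    (forall i j, e i j -> dotv (u i) (u j) <= - (t - 1)^-1).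

Definition strict_vector_coloring (R : realType) (n : nat) (e : rel 'I_n) (t : R) : Prop :=
  exists u : 'I_n -> 'rV[R]_n,
    (forall i, dotv (u i) (u i) = 1) /\
    (forall i j, e i j -> dotv (u i) (u j) = - (t - 1)^-1).

Definition is_least_coloring_number (R : realType) (P : R -> Prop) (t : R) : Prop :=
  2 <= t /\ P t /\ forall s, 2 <= s -> P s -> t <= s.

Definition is_chi_v (R : realType) (n : nat) (e : rel 'I_n) (t : R) : Prop :=
  is_least_coloring_number (vector_coloring e) t.

Definition is_chi_sv (R : realType) (n : nat) (e : rel 'I_n) (t : R) : Prop :=
  is_least_coloring_number (strict_vector_coloring e) t.

(* Main.v *)
Require Import Defs.
From mathcomp Require Import all_boot all_order all_algebra all_fingroup.
From mathcomp Require Import reals.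
From mathcomp Require Import complex spectral lra ring.
Import Order.TTheory GRing.Theory Num.Theory.
Local Open Scope ring_scope.
Set Implicit Arguments. Unset Strict Implicit. Unset Printing Implicit Defensive.
Section S.
Variable R : realType.
Local Notation C := (R[i]).
Local Notation f := (@real_complex_def R (Phant R)).

Lemma Re_sum (I : Type) (r : seq I) (P : pred I) (F : I -> C) :
  complex.Re (\sum_(i <- r | P i) F i) = \sum_(i <- r | P i) complex.Re (F i).
Proof. by apply: (big_morph (@complex.Re R)) => // -[a b] [c d]. Qed.
Lemma Im_sum (I : Type) (r : seq I) (P : pred I) (F : I -> C) :
  complex.Im (\sum_(i <- r | P i) F i) = \sum_(i <- r | P i) complex.Im (F i).
Proof. by apply: (big_morph (@complex.Im R)) => // -[a b] [c d]. Qed.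

Lemma fReal (x : R) : f x \is Num.real.
Proof. by rewrite complex_real. Qed.

Lemma real_eig_of_complex n (A : 'M[R]_n) (r : R) (y : 'rV[C]_n) :
  y *m (map_mx f A) = f r *: y -> y != 0 -> eigenvalue A r.
Proof.
move=> hy y0.
have hRe : map_mx (@complex.Re R) y *m A = r *: map_mx (@complex.Re R) y.
  apply/rowP => j; have /rowP/(_ j) := hy; rewrite !mxE => h.
  rewrite (eq_bigr (fun i => complex.Re (y 0 i * map_mx f A i j))); last first.
    by move=> i _; rewrite !mxE; case: (y 0 i) => a b /=; rewrite mulr0 subr0.
  rewrite -Re_sum h.
  by case: (y 0 j) => a b /=; rewrite mul0r subr0.
have hIm : map_mx (@complex.Im R) y *m A = r *: map_mx (@complex.Im R) y.
  apply/rowP => j; have /rowP/(_ j) := hy; rewrite !mxE => h.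
  rewrite (eq_bigr (fun i => complex.Im (y 0 i * map_mx f A i j))); last first.
    by move=> i _; rewrite !mxE; case: (y 0 i) => a b /=; rewrite mulr0 add0r.
  rewrite -Im_sum h.
  by case: (y 0 j) => a b /=; rewrite mul0r addr0.
have [a0|a0] := eqVneq (map_mx (@complex.Re R) y) 0; last first.
  by apply/eigenvalueP; exists (map_mx (@complex.Re R) y).
have [b0|b0] := eqVneq (map_mx (@complex.Im R) y) 0; last first.
  by apply/eigenvalueP; exists (map_mx (@complex.Im R) y).
case/eqP: y0; apply/rowP => j.
have /rowP/(_ j) := a0; have /rowP/(_ j) := b0; rewrite !mxE.
by case: (y 0 j) => a b /= -> ->.
Qed.


Lemma quad_lb n (A : 'M[R]_n) (l : R) : A^T = A ->
  (forall m, eigenvalue A m -> l <= m) ->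
  forall x : 'rV[R]_n, l * (x *m x^T) 0 0 <= (x *m A *m x^T) 0 0.
Proof.
move=> AT hl x.
set AC := map_mx f A.
have ACr : AC \is a mxOver Num.real by apply/mxOverP => i j; rewrite mxE fReal.
have ACs : AC \is symmetricmx.
  apply/is_hermitianmxP; rewrite expr0 scale1r; apply/matrixP => i j.
  by rewrite !mxE /= -{1}AT mxE.
have ACh := realsym_hermsym ACs ACr.
have ACn := symmetric_normalmx ACs ACr.
set P := spectralmx AC; set D := spectral_diag AC.
have PU : P \is unitarymx := spectral_unitarymx AC.
have Deq : AC = invmx P *m diag_mx D *m P by apply/orthomx_spectralP.
rewrite invmx_unitary // in Deq.
have PP : P *m (map_mx Num.Def.conjC P^T) = 1%:M by apply/unitarymxP.
have PP' := mulmx1C PP.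
have Dr := hermitian_spectral_diag_real ACh.
have Dge : forall k, f l <= D 0 k.
  move=> k.
  have Dk : D 0 k = f (complex.Re (D 0 k)).
    by rewrite RRe_real //; move/mxOverP: Dr; apply.
  have hy : row k P *m AC = D 0 k *: row k P.
    rewrite Deq !mulmxA -!row_mul PP mul1mx row_mul row_diag_mx -scalemxAl.
    by rewrite -rowE.
  have y0 : row k P != 0.
    apply/eqP => h; have := (row_unitarymxP PU) k k.
    by rewrite h dotmxE mul0mx mxE eqxx => /eqP; rewrite eq_sym oner_eq0.
  rewrite Dk lecR; apply: hl.
  by apply: (real_eig_of_complex (y := row k P)) => //; rewrite -Dk.
set xC := map_mx f x.
set w := xC *m (map_mx Num.Def.conjC P^T).
have xCr : map_mx Num.Def.conjC xC^T = xC^T.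
  by apply: realmxC; apply/mxOverP => i j; rewrite !mxE fReal.
have hz : forall k, (P *m xC^T) k 0 = (w 0 k)^*.
  move=> k; rewrite /w !mxE rmorph_sum; apply: eq_bigr => i _.
  rewrite !mxE rmorphM /= conjCK mulrC; congr (_ * _).
  by have /matrixP/(_ i 0) := xCr; rewrite !mxE.
have e1 : f ((x *m A *m x^T) 0 0) = \sum_k D 0 k * (w 0 k * (w 0 k)^*).
  rewrite (_ : f _ = map_mx f (x *m A *m x^T) 0 0); last by rewrite [RHS]mxE.
  rewrite !map_mxM -map_trmx -/AC -/xC.
  rewrite Deq !mulmxA -/w -(mulmxA _ P) mul_mx_diag mxE.
  by apply: eq_bigr => k _; rewrite mxE hz mulrCA mulrA.
have e2 : f ((x *m x^T) 0 0) = \sum_k (w 0 k * (w 0 k)^*).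
  rewrite (_ : f _ = map_mx f (x *m x^T) 0 0); last by rewrite [RHS]mxE.
  rewrite !map_mxM -map_trmx -/xC.
  rewrite -[xC in xC *m _]mulmx1 -PP' !mulmxA -/w -(mulmxA _ P) mxE.
  by apply: eq_bigr => k _; rewrite hz.
rewrite -subr_ge0 -ler0c rmorphB rmorphM /= e1 e2 mulr_sumr -sumrB.
apply: sumr_ge0 => k _; rewrite -mulrBl; apply: mulr_ge0.
  by rewrite subr_ge0.
exact: mul_conjC_ge0.
Qed.

End S.

Section Graph.
Variable R : realType.
Variable n : nat.
Variable e : rel 'I_n.
Hypothesis esym : forall x y, e x y = e y x.
Hypothesis eirr : forall x, ~~ e x x.
Local Notation A := (adjmx R e).

Lemma AT : A^T = A.
Proof. by apply/matrixP => i j; rewrite !mxE esym. Qed.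

Lemma Asym i j : A i j = A j i.
Proof. by rewrite !mxE esym. Qed.

Lemma A_ge0 i j : 0 <= A i j.
Proof. by rewrite mxE ler0n. Qed.

Definition deg (i : 'I_n) : R := \sum_j A i j.

Lemma deg_aut s i : is_aut e s -> deg (s i) = deg i.
Proof.
move=> hs; rewrite /deg (reindex_inj (@perm_inj _ s)) /=.
by apply: eq_bigr => j _; rewrite !mxE hs.
Qed.

Hypothesis vt : vertex_transitive e.

Lemma deg_const i j : deg i = deg j.
Proof. by have [s [hs <-]] := vt j i; rewrite deg_aut. Qed.

Lemma eig_bound m i : eigenvalue A m -> `|m| <= deg i.
Proof.
case/eigenvalueP => v hv v0.
have [k0 _ hk] := @arg_maxP _ _ _ i xpredT (fun j => `|v 0 j|) isT.
have vk0 : 0 < `|v 0 k0|.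
  rewrite normr_gt0; apply: contra v0 => /eqP h; apply/eqP/rowP => j.
  rewrite mxE; apply/eqP; rewrite -normr_eq0 eq_le normr_ge0 andbT.
  by have := hk j isT; rewrite /= h normr0.
rewrite -(ler_pM2r vk0) (deg_const i k0) -normrM.
have -> : m * v 0 k0 = \sum_j v 0 j * A j k0.
  by have /rowP/(_ k0) := hv; rewrite !mxE => <-.
rewrite /deg mulr_suml; apply: le_trans (ler_norm_sum _ _ _) _.
apply: ler_sum => j _; rewrite normrM (ger0_norm (A_ge0 _ _)) Asym mulrC.
by apply: ler_wpM2l; [apply: A_ge0 | apply: hk].
Qed.

Lemma eig_deg i : eigenvalue A (deg i).
Proof.
apply/eigenvalueP; exists (const_mx 1); last first.
  apply/eqP => /rowP/(_ i); rewrite !mxE => /eqP; by rewrite oner_eq0.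
apply/rowP => k; rewrite !mxE (deg_const i k) mulr1 /deg.
by apply: eq_bigr => j _; rewrite mxE mul1r Asym.
Qed.

End Graph.

Section Graph2.
Variable R : realType.
Variable n : nat.
Variable e : rel 'I_n.
Hypothesis esym : forall x y, e x y = e y x.
Hypothesis eirr : forall x, ~~ e x x.
Local Notation A := (adjmx R e).

Lemma dotvE (u v : 'rV[R]_n) : dotv u v = \sum_k u 0 k * v 0 k.
Proof. by rewrite /dotv mxE; apply: eq_bigr => k _; rewrite mxE. Qed.

Lemma gram_lb (l : R) : (forall m, eigenvalue A m -> l <= m) ->
  forall u : 'I_n -> 'rV[R]_n,
  l * \sum_i dotv (u i) (u i) <= \sum_i \sum_j A i j * dotv (u i) (u j).
Proof.
move=> hl u.
have h k := quad_lb (AT R esym) hl (\row_i (u i 0 k)).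
under eq_bigr do rewrite dotvE.
rewrite exchange_big mulr_sumr.
under [X in _ <= X]eq_bigr do under eq_bigr do rewrite dotvE mulr_sumr.
under [X in _ <= X]eq_bigr do rewrite exchange_big.
rewrite exchange_big; apply: ler_sum => k _.
set x := \row_i (u i 0 k).
have e1 : (x *m x^T) 0 0 = \sum_i u i 0 k * u i 0 k.
  by rewrite mxE; apply: eq_bigr => i _; rewrite !mxE.
have e2 : (x *m A *m x^T) 0 0 = \sum_i \sum_j A i j * (u i 0 k * u j 0 k).
  rewrite mxE exchange_big; apply: eq_bigr => j _ /=.
  rewrite !mxE mulr_suml; apply: eq_bigr => i _; rewrite !mxE.
  by rewrite mulrCA mulrA mulrC !mulrA.
by have := h k; rewrite -/x e1 e2.
Qed.


Lemma ln_neg (l : R) : (forall m, eigenvalue A m -> l <= m) ->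
  forall a b, e a b -> l <= -1.
Proof.
move=> hl a b hab.
have ab : a != b by apply: contraTneq hab => ->; exact: eirr.
set x : 'rV[R]_n := delta_mx 0 a - delta_mx 0 b.
have h := quad_lb (AT R esym) hl x.
have xT : x^T = delta_mx a 0 - delta_mx b 0 by rewrite linearB /= !trmx_delta.
have col_x (y : 'rV[R]_n) : (y *m x^T) 0 0 = y 0 a - y 0 b.
  by rewrite xT mulmxBr -!colE !mxE.
move: h; rewrite !col_x /x mulmxBl -!rowE !mxE !eqxx (negbTE ab) eq_sym (negbTE ab).
rewrite hab esym hab (negbTE (eirr a)) (negbTE (eirr b)) /=.
move=> h.
move: h; rewrite !subr0 !sub0r opprK => h.
lra.
Qed.

Lemma arith_lb (l d s : R) : l < 0 -> 1 < s -> l <= - (s - 1)^-1 * d ->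
  1 - d / l <= s.
Proof.
move=> l0 s1 h.
set c := (s - 1)^-1.
have hc : (s - 1) * c = 1 by rewrite mulfV // subr_eq0 gt_eqF.
have hl : l * l^-1 = 1 by rewrite mulfV // lt_eqF.
have c0 : 0 < c by rewrite invr_gt0 subr_gt0.
have k1 : 0 <= (- (c * d) - l) * (- l^-1).
  apply: mulr_ge0; first by rewrite subr_ge0 -mulNr.
  by rewrite oppr_ge0 invr_le0 ltW.
have k1' : 0 <= c * d * l^-1 + 1.
  by move: k1; rewrite mulrN mulrBl opprB hl mulNr opprK addrC.
have k2 : 0 <= (s - 1) * (c * d * l^-1 + 1) by apply: mulr_ge0 => //; lra.
have : (s - 1) * (c * d * l^-1 + 1) = d * l^-1 + (s - 1).
  by rewrite mulrDr mulr1 !mulrA hc mul1r.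
move=> E; rewrite E in k2; lra.
Qed.

Hypothesis vt : vertex_transitive e.

Lemma lower_bound (l s : R) a b : (forall m, eigenvalue A m -> l <= m) ->
  e a b -> 2 <= s -> vector_coloring e s -> 1 - deg R e a / l <= s.
Proof.
move=> hl hab s2 [u [u1 hu]].
have l0 : l < 0 by have := ln_neg hl hab; lra.
apply: arith_lb => //; first lra.
have n0 : (0 < n)%N by case: n a {hab hl u u1 hu} => // -[].
have := gram_lb hl u.
under eq_bigr do rewrite u1.
rewrite sumr_const card_ord => /le_trans; move/(_ (\sum_i \sum_j A i j * (- (s - 1)^-1))).
have H : \sum_i \sum_j A i j * dotv (u i) (u j) <= \sum_i \sum_j A i j * (- (s - 1)^-1).
  apply: ler_sum => i _; apply: ler_sum => j _; rewrite mxE.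
  by case: (boolP (e i j)) => hij; [rewrite !mul1r; apply: hu | rewrite !mul0r].
move=> /(_ H).
under eq_bigr do rewrite -mulr_suml -/(deg R e _) (deg_const R vt _ a).
rewrite sumr_const card_ord => h.
rewrite -(ler_pM2r (_ : 0 < n%:R)) ?ltr0n //; move: h.
by rewrite (mulrC (deg R e a)) [X in _ -> _ <= X]mulr_natr.
Qed.

End Graph2.

Section Graph3.
Variable R : realType.
Variable n : nat.
Variable e : rel 'I_n.
Hypothesis esym : forall x y, e x y = e y x.
Hypothesis eirr : forall x, ~~ e x x.
Local Notation A := (adjmx R e).

Definition autb (s : {perm 'I_n}) := [forall x, [forall y, e (s x) (s y) == e x y]].

Lemma autbP s : reflect (is_aut e s) (autb s).
Proof.
apply: (iffP forallP) => [h x y | h x]; first by have /forallP/(_ y)/eqP := h x.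
by apply/forallP => y; rewrite h.
Qed.

Lemma autbM t s : autb t -> autb (t * s)%g = autb s.
Proof.
move=> /autbP ht; apply/autbP/autbP => hs x y.
  have := hs ((t^-1)%g x) ((t^-1)%g y); rewrite !permM !permKV => ->.
  by rewrite -ht !permKV.
by rewrite !permM hs ht.
Qed.

Variable l : R.
Variable v : 'rV[R]_n.
Hypothesis hv : v *m A = l *: v.

Definition M i j := \sum_(s | autb s) v 0 (s i) * v 0 (s j).

Lemma M_aut t i j : autb t -> M (t i) (t j) = M i j.
Proof.
move=> ht; rewrite /M [RHS](reindex_inj (mulgI t)) /=.
apply: eq_big => s; first by rewrite autbM.
by rewrite !permM.
Qed.

Lemma AM i k : \sum_j A i j * M j k = l * M i k.
Proof.
rewrite /M; under eq_bigr do rewrite mulr_sumr.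
rewrite exchange_big mulr_sumr; apply: eq_bigr => s /autbP hs.
transitivity (v 0 (s k) * \sum_j A (s i) j * v 0 j).
  rewrite mulr_sumr [RHS](reindex_inj (@perm_inj _ s)) /=; apply: eq_bigr => j _.
  by rewrite !mxE hs; ring.
have /rowP/(_ (s i)) := hv; rewrite !mxE => h.
rewrite (_ : \sum_j A (s i) j * v 0 j = l * v 0 (s i)); first by ring.
by rewrite -h; apply: eq_bigr => j _; rewrite (Asym R esym) mulrC.
Qed.

Definition N i j := \sum_k M i k * M j k.

Lemma N_aut t i j : autb t -> N (t i) (t j) = N i j.
Proof.
move=> ht; rewrite /N (reindex_inj (@perm_inj _ t)) /=.
by apply: eq_bigr => k _; rewrite !M_aut.
Qed.

Lemma N_sym i j : N i j = N j i.
Proof. by apply: eq_bigr => k _; rewrite mulrC. Qed.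

Lemma AN i k : \sum_j A i j * N j k = l * N i k.
Proof.
rewrite /N; under eq_bigr do rewrite mulr_sumr.
rewrite exchange_big mulr_sumr; apply: eq_bigr => m _.
by rewrite mulrA -AM mulr_suml; apply: eq_bigr => j _; rewrite mulrA.
Qed.

Lemma M_diag i : v 0 i ^+ 2 <= M i i.
Proof.
rewrite /M (bigD1 1%g) /=; last by apply/autbP => x y; rewrite !perm1.
rewrite perm1 -expr2 lerDl; apply: sumr_ge0 => s _; rewrite -expr2.
exact: sqr_ge0.
Qed.

Lemma N_diag i : M i i ^+ 2 <= N i i.
Proof.
rewrite /N (bigD1 i) //= -expr2 lerDl; apply: sumr_ge0 => k _; rewrite -expr2.
exact: sqr_ge0.
Qed.

End Graph3.

Section Graph4.
Variable R : realType.
Variable n : nat.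
Variable e : rel 'I_n.
Hypothesis esym : forall x y, e x y = e y x.
Hypothesis eirr : forall x, ~~ e x x.
Hypothesis vt : vertex_transitive e.
Hypothesis et : edge_transitive e.
Local Notation A := (adjmx R e).

Lemma deg_pos a b : e a b -> 1 <= deg R e a.
Proof.
move=> hab; rewrite /deg (bigD1 b) //= mxE hab lerDl.
by apply: sumr_ge0 => j _; apply: A_ge0.
Qed.

Lemma pair_eq (x y x' y' : 'I_n) : x' != y' ->
  [set x; y] = [set x'; y'] -> (x = x' /\ y = y') \/ (x = y' /\ y = x').
Proof.
move=> ne h.
have hx' : x' \in [set x; y] by rewrite h !inE eqxx.
have hy' : y' \in [set x; y] by rewrite h !inE eqxx orbT.
move: hx' hy'; rewrite !inE => /orP[]/eqP ex /orP[]/eqP ey; subst; move: ne; rewrite ?eqxx //= => _; auto.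
Qed.

Lemma coloring_exists (l : R) (v : 'rV[R]_n) a b :
  v *m A = l *: v -> v != 0 -> e a b ->
  exists u : 'I_n -> 'rV[R]_n, (forall i, dotv (u i) (u i) = 1) /\
    (forall i j, e i j -> dotv (u i) (u j) = l / deg R e a).
Proof.
move=> hv v0 hab.
have /existsP [i0 hi0] : [exists i, v 0 i != 0].
  apply: contraR v0 => /existsPn h; apply/eqP/rowP => i; rewrite mxE.
  by move: (h i); rewrite negbK => /eqP.
set p := N e v i0 i0.
have p0 : 0 < p.
  have h1 : 0 < v 0 i0 ^+ 2 by rewrite lt_def sqr_ge0 sqrf_eq0 hi0.
  have h2 := M_diag e v i0.
  have h3 := N_diag e v i0.
  apply: lt_le_trans h3; rewrite exprn_gt0 //; exact: lt_le_trans h2.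
have Ndiag i : N e v i i = p.
  have [s [hs <-]] := vt i0 i.
  by apply: N_aut; apply/autbP.
have Nedge i j : e i j -> N e v i j = N e v a b.
  move=> hij; have [s [hs hset]] := et hab hij.
  have ne : i != j by apply: contraTneq hij => ->; exact: eirr.
  have hs' : autb e s by apply/autbP.
  case: (pair_eq ne hset) => -[<- <-]; first by rewrite N_aut.
  by rewrite N_sym N_aut.
have dpos := deg_pos hab.
have dc : deg R e a * N e v a b = l * p.
  rewrite -(Ndiag a) -(AN esym hv) /deg mulr_suml; apply: eq_bigr => j _.
  rewrite mxE; case: (boolP (e a j)) => haj; last by rewrite !mul0r.
  by rewrite !mul1r [RHS]N_sym (Nedge _ _ haj).
set c := (Num.sqrt p)^-1.
have c2 : c * c = p^-1.
  by rewrite -expr2 /c exprVn sqr_sqrtr // ltW.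
exists (fun i => c *: \row_k M e v i k).
have dotu i j : dotv (c *: \row_k M e v i k) (c *: \row_k M e v j k) = N e v i j / p.
  rewrite dotvE /N mulrC -c2 mulr_sumr; apply: eq_bigr => k _; rewrite !mxE.
  ring.
split => [i|i j hij]; rewrite dotu.
  by rewrite Ndiag mulfV // gt_eqF.
rewrite Nedge //.
have -> : N e v a b = l * p / deg R e a.
  by rewrite -dc [deg R e a * _]mulrC mulfK // gt_eqF // (lt_le_trans ltr01).
field; apply/andP; split; rewrite gt_eqF //; exact: (lt_le_trans ltr01).
Qed.

End Graph4.

Unset Implicit Arguments. Set Strict Implicit.

Theorem mainTheorem12 (R : realType) (n : nat) (e : rel 'I_n) (l1 ln : R) :
  simple_graph e -> has_edge e ->
  vertex_transitive e -> edge_transitive e ->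
  largest_eigenvalue (adjmx R e) l1 ->
  smallest_eigenvalue (adjmx R e) ln ->
  is_chi_v e (1 - l1 / ln) /\ is_chi_sv e (1 - l1 / ln).
Proof.
move=> [esym eirr] [a [b hab]] vt et [eig1 hl1] [eign hln].
set d := deg R e a.
have d1 : 1 <= d := deg_pos R hab.
have hd : l1 = d.
  apply/eqP; rewrite eq_le; apply/andP; split.
    by apply: le_trans (eig_bound esym vt a eig1); apply: ler_norm.
  by apply: hl1; apply: eig_deg.
rewrite hd.
have ln1 : ln <= -1 := ln_neg esym eirr hln hab.
have lnd : - d <= ln.
  by have := eig_bound esym vt a eign; rewrite ler_norml => /andP[].
have t2 : 2 <= 1 - d / ln.
  have : d / ln + 1 = (d + ln) * ln^-1 by rewrite mulrDl mulfV // lt_eqF //; lra.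
  have : (d + ln) * ln^-1 <= 0.
    apply: mulr_ge0_le0; first lra.
    by rewrite invr_le0; lra.
  lra.
have [v hv v0] := eigenvalueP eign.
have [u [u1 hu]] := coloring_exists esym eirr vt et hv v0 hab.
have tE : - ((1 - d / ln) - 1)^-1 = ln / d.
  by rewrite addrAC subrr add0r invrN opprK invf_div.
have sc : strict_vector_coloring e (1 - d / ln).
  by exists u; split => // i j hij; rewrite tE -/d hu.
have vc : vector_coloring e (1 - d / ln).
  by exists u; split => // i j hij; rewrite tE -/d hu.
have lb s : 2 <= s -> vector_coloring e s -> 1 - d / ln <= s.
  by move=> s2 hs; apply: (lower_bound esym eirr vt hln hab s2 hs).
split; split => //; split => //.
move=> s s2 [w [w1 hw]]; apply: lb => //.
by exists w; split => // i j hij; rewrite hw.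
Qed.
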